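(* Let $S_0,S_1,S_2$ be pair-partitions of $[2k]$, and let $\mathbf{p}=(p_1,\dots,p_m)$, $\mathbf{q}=(q_1,\dots,q_m)$ be sequences of positive integers with $q_1\ge\cdots\ge q_m$. Then $$N^{(1)}_{S_0,S_1,S_2}(\mathbf{p}\times\mathbf{q})=\sum_{\varphi:\mathcal{L}(S_0,S_2)\to\mathbb{N}^\star}\ \prod_{\ell\in\mathcal{L}(S_0,S_2)}p_{\varphi(\ell)}\prod_{m'\in\mathcal{L}(S_0,S_1)}q_{\psi(m')},$$ with the convention $p_i=q_i=0$ for $i>m$, where $\psi(m')=\max_\ell\varphi(\ell)$, $\ell$ running over the loops of $\mathcal{L}(S_0,S_2)$ which have an edge with the same label as some edge of $m'$.
   Context: Pair-partitions of $[2k]$ are sets of disjoint two-element subsets with union $[2k]$, identified with fixed-point-free involutions. $\mathcal{L}(A,B)$ is the bipartite graph with a black vertex per pair of $A$, a white vertex per pair of $B$, and an edge labeled $i$ for each $i\in[2k]$ joining the pairs containing $i$; it is viewed as the set of its connected components (loops). $\mathbf{p}\times\mathbf{q}$ is the partition consisting of $q_i$ repeated $p_i$ times for $i=1,\dots,m$. $N^{(1)}_{S_0,S_1,S_2}(\lambda)$ is the number of functions $f$ from $[2k]$ to the boxes of $\lambda$ such that for all $l$: $f(l)=f(S_0(l))$; $f(l)$ and $f(S_1(l))$ are in the same column; $f(l)$ and $f(S_2(l))$ are in the same row. *)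

(* Defs.v *)
From mathcomp Require Import all_boot.
Set Implicit Arguments. Unset Strict Implicit. Unset Printing Implicit Defensive.

(* A pair-partition of [n] (here [n] = {0,...,n-1} = 'I_n), identified with a
   fixed-point-free involution. *)
Definition pair_partition (n : nat) (S : 'I_n -> 'I_n) : Prop :=
  forall i, S i != i /\ S (S i) = i.

(* The bipartite graph L(A,B): black vertex per pair of A, white vertex per
   pair of B, edge labelled i joining the A-pair and the B-pair containing i.
   Edges i and A i share a black vertex, edges i and B i share a white vertex;
   a connected component (loop) is identified with its set of edge labels. *)
Definition loop_rel (n : nat) (A B : 'I_n -> 'I_n) : rel 'I_n :=
  fun i j => (j == A i) || (j == B i).

Definition loops (n : nat) (A B : 'I_n -> 'I_n) : {set {set 'I_n}} :=
  [set [set j | connect (loop_rel A B) i j] | i : 'I_n].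

Definition loop_type (n : nat) (A B : 'I_n -> 'I_n) :=
  {l : {set 'I_n} | l \in loops A B}.

(* Rows of a partition given as a sequence of row lengths; a box is (r, c)
   with r < size lam and c < lam_r (row r, column c; 0-indexed). *)
Definition box_type (lam : seq nat) := ('I_(size lam) * 'I_(\max_(x <- lam) x))%type.

Definition is_box (lam : seq nat) (b : box_type lam) : bool :=
  (b.2 < nth 0 lam b.1)%N.

Definition N1 (n : nat) (S0 S1 S2 : 'I_n -> 'I_n) (lam : seq nat) : nat :=
  #|[set f : {ffun 'I_n -> box_type lam} |
      [forall l, [&& is_box (f l),
                     f l == f (S0 l),
                     (f l).2 == (f (S1 l)).2 &
                     (f l).1 == (f (S2 l)).1]]]|.

Definition pq_partition (p q : seq nat) : seq nat :=
  flatten [seq nseq (nth 0 p i) (nth 0 q i) | i <- iota 0 (size p)].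

(* Main.v *)
Require Import Defs.
From mathcomp Require Import all_boot.
Set Implicit Arguments. Unset Strict Implicit. Unset Printing Implicit Defensive.

Section Loops.
Variables (n : nat) (A B : 'I_n -> 'I_n).
Hypotheses (hA : forall i, A (A i) = i) (hB : forall i, B (B i) = i).

Lemma lr_sym : symmetric (loop_rel A B).
Proof.
move=> i j; rewrite /loop_rel.
by apply/idP/idP; case/orP => /eqP ->; rewrite ?hA ?hB eqxx ?orbT.
Qed.

Lemma csym : connect_sym (loop_rel A B).
Proof. exact: sym_connect_sym lr_sym. Qed.

Lemma lp_proof (j : 'I_n) : [set x | connect (loop_rel A B) j x] \in loops A B.
Proof. by apply/imsetP; exists j. Qed.

Definition lp (j : 'I_n) : loop_type A B := exist (fun l => l \in loops A B) _ (lp_proof j).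

Lemma mem_lp (l : loop_type A B) j : (j \in val l) = (lp j == l).
Proof.
case: l => s Hs /=; have [i _ Hi] := imsetP Hs; subst s.
rewrite inE; apply/idP/eqP => [Hij|E].
  apply: val_inj => /=; apply/setP => x; rewrite !inE.
  by rewrite (same_connect csym Hij).
have E' : val (lp j) = [set x | connect (loop_rel A B) i x] by rewrite E.
by move/setP: E' => /(_ j); rewrite !inE connect0 => <-.
Qed.

Lemma lp_eq j j' : (lp j' == lp j) = connect (loop_rel A B) j j'.
Proof. by rewrite -mem_lp /= inE. Qed.

Lemma lpA j : lp (A j) = lp j.
Proof. by apply/eqP; rewrite lp_eq connect1 // /loop_rel eqxx. Qed.

Lemma lpB j : lp (B j) = lp j.
Proof. by apply/eqP; rewrite lp_eq connect1 // /loop_rel eqxx orbT. Qed.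

Lemma lp_surj l : exists j, lp j = l.
Proof.
move: (valP l) => /imsetP [i _ Hi]; exists i; apply: val_inj => /=.
by rewrite Hi.
Qed.

Lemma lp_inv (U : Type) (h : 'I_n -> U) :
  (forall x, h (A x) = h x) -> (forall x, h (B x) = h x) ->
  forall x y, lp x = lp y -> h x = h y.
Proof.
move=> HA HB x y /eqP; rewrite lp_eq => /connectP [pth Hp ->].
elim: pth y Hp => [|z pth IH] y //= /andP [eyz Hp].
rewrite (IH z Hp); case/orP: eyz => /eqP ->; by rewrite ?HA ?HB.
Qed.

End Loops.

Lemma N1_sum (n : nat) (S0 S1 S2 : 'I_n -> 'I_n)
  (h0 : forall i, S0 (S0 i) = i) (h1 : forall i, S1 (S1 i) = i)
  (h2 : forall i, S2 (S2 i) = i) (lam : seq nat) :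
  N1 S0 S1 S2 lam =
  \sum_(R : {ffun loop_type S0 S2 -> 'I_(size lam)})
   \sum_(C : {ffun loop_type S0 S1 -> 'I_(\max_(x <- lam) x)})
     [forall j, (C (lp S0 S1 j) : nat) < nth 0 lam (R (lp S0 S2 j))].
Proof.
set M := \max_(x <- lam) x.
pose cond := fun RC : {ffun loop_type S0 S2 -> 'I_(size lam)} *
                      {ffun loop_type S0 S1 -> 'I_M} =>
  [forall j, (RC.2 (lp S0 S1 j) : nat) < nth 0 lam (RC.1 (lp S0 S2 j))].
pose g := fun RC : {ffun loop_type S0 S2 -> 'I_(size lam)} *
                      {ffun loop_type S0 S1 -> 'I_M} =>
  [ffun j => (RC.1 (lp S0 S2 j), RC.2 (lp S0 S1 j))] : {ffun 'I_n -> box_type lam}.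
have ginj : injective g.
  move=> [R C] [R' C'] /ffunP E; congr (_, _); apply/ffunP => l.
    have [j <-] := lp_surj l.
    by have := E j; rewrite !ffunE /= => -[].
  have [j <-] := lp_surj l.
  by have := E j; rewrite !ffunE /= => -[].
have Eset : [set f : {ffun 'I_n -> box_type lam} |
      [forall l, [&& is_box (f l),
                     f l == f (S0 l),
                     (f l).2 == (f (S1 l)).2 &
                     (f l).1 == (f (S2 l)).1]]] = g @: [set RC | cond RC].
  apply/setP => f; rewrite inE; apply/idP/imsetP.
    move/forallP => Hf.
    have : forall l : loop_type S0 S2, exists r, forall j, lp S0 S2 j = l -> (f j).1 = r.
      move=> l; have [j0 <-] := lp_surj l; exists (f j0).1 => j Hj.
      apply: (lp_inv h0 h2 (h := fun j => (f j).1)) => // x.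
        by case/and4P: (Hf x) => _ /eqP -> _ _.
      by case/and4P: (Hf x) => _ _ _ /eqP ->.
    move/fin_all_exists => [R0 HR0].
    have : forall l : loop_type S0 S1, exists c, forall j, lp S0 S1 j = l -> (f j).2 = c.
      move=> l; have [j0 <-] := lp_surj l; exists (f j0).2 => j Hj.
      apply: (lp_inv h0 h1 (h := fun j => (f j).2)) => // x.
        by case/and4P: (Hf x) => _ /eqP -> _ _.
      by case/and4P: (Hf x) => _ _ /eqP -> _.
    move/fin_all_exists => [C0 HC0].
    exists ([ffun l => R0 l], [ffun l => C0 l]).
      rewrite inE; apply/forallP => j; rewrite /= !ffunE.
      rewrite -(HR0 _ j erefl) -(HC0 _ j erefl).
      by case/and4P: (Hf j).
    apply/ffunP => j; rewrite ffunE /= !ffunE -(HR0 _ j erefl) -(HC0 _ j erefl).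
    by case: (f j).
  move=> [[R C] HRC ->]; rewrite inE in HRC.
  apply/forallP => j; rewrite !ffunE /= !(lpA h0 h2) !(lpB h0 h2) !(lpA h0 h1) !(lpB h0 h1).
  by rewrite !eqxx /is_box /= (forallP HRC j).
rewrite /N1 Eset card_imset // pair_big /= -sum1_card big_mkcond /=.
apply: eq_bigr => RC _; rewrite inE /cond; by case: ifP.
Qed.

Lemma prod_b2n (I : finType) (P : pred I) :
  \prod_(i : I) (P i : nat) = [forall i, P i].
Proof.
case: (boolP [forall i, P i]) => [/forallP H|/forallPn [i Hi]].
  by apply: big1 => i _; rewrite H.
by rewrite (bigD1 i) //= (negbTE Hi) mul0n.
Qed.

Lemma sum_ffun_forall (I J K : finType) (lj : J -> I) (P : J -> K -> bool) :
  \sum_(C : {ffun I -> K}) [forall j, P j (C (lj j))] =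
  \prod_(i : I) \sum_(c : K) [forall j, (lj j == i) ==> P j c].
Proof.
rewrite bigA_distr_bigA; apply: eq_bigr => C _; rewrite prod_b2n.
congr nat_of_bool; apply/forallP/forallP => H.
  move=> i; apply/forallP => j; apply/implyP => /eqP <-; exact: H.
by move=> j; move/forallP: (H (lj j)) => /(_ j); rewrite eqxx.
Qed.

Lemma count_lt (M t : nat) : t <= M -> \sum_(c : 'I_M) (c < t) = t.
Proof.
move=> tM; rewrite -(big_mkord xpredT (fun c => (c < t) : nat)).
rewrite (@big_cat_nat _ _ _ t 0 M _ _ (leq0n t) tM) /=.
rewrite (eq_big_nat _ _ (F2 := fun _ => 1)); last by move=> i /andP [_ ->].
rewrite (eq_big_nat _ _ (F2 := fun _ => 0) (m := t)); last first.
  by move=> i /andP [ti _]; rewrite ltnNge ti.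
by rewrite !sum_nat_const_nat muln0 muln1 subn0 addn0.
Qed.

Definition Blist (p : seq nat) : seq nat :=
  flatten [seq nseq (nth 0 p i) i | i <- iota 0 (size p)].

Lemma lamE (p q : seq nat) : pq_partition p q = map (nth 0 q) (Blist p).
Proof.
rewrite /pq_partition /Blist map_flatten -map_comp; congr flatten.
by apply: eq_map => i /=; rewrite map_nseq.
Qed.

Lemma B_lt (p : seq nat) x : x \in Blist p -> x < size p.
Proof.
case/flattenP => s /mapP [i]; rewrite mem_iota add0n => /andP [_ Hi] ->.
by rewrite mem_nseq => /andP [_ /eqP ->].
Qed.

Lemma count_B (p : seq nat) i : i < size p -> count_mem i (Blist p) = nth 0 p i.
Proof.
move=> Hi; rewrite /Blist count_flatten -map_comp sumnE big_map.
rewrite (bigD1_seq i) ?mem_iota ?iota_uniq //= count_nseq /= eqxx mul1n.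
rewrite big1_seq ?addn0 // => j /andP [Hj _] /=.
by rewrite count_nseq /= (negbTE Hj).
Qed.

Section Main.
Variables (p q : seq nat).
Hypothesis hs : size p = size q.
Hypothesis hmono : forall i j, (i <= j < size q)%N -> (nth 0 q j <= nth 0 q i)%N.

Local Notation lam := (pq_partition p q).

Lemma blk_lt (r : 'I_(size lam)) : nth 0 (Blist p) r < size p.
Proof.
apply: B_lt; apply: mem_nth; have := ltn_ord r; move: (nat_of_ord r) => x.
by rewrite lamE size_map.
Qed.

Lemma nth_lam (r : 'I_(size lam)) : nth 0 lam r = nth 0 q (nth 0 (Blist p) r).
Proof.
have := ltn_ord r; move: (nat_of_ord r) => x.
by rewrite lamE size_map => Hr; rewrite (nth_map 0).
Qed.

Definition blkO (r : 'I_(size lam)) : 'I_(size p) := Ordinal (blk_lt r).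

Lemma step4 (L1 L2 : finType) (meets : L1 -> L2 -> bool) :
  \sum_(R : {ffun L2 -> 'I_(size lam)})
     \prod_(m : L1) nth 0 q (\max_(l | meets m l) nth 0 (Blist p) (R l)) =
  \sum_(phi : {ffun L2 -> 'I_(size p)})
     (\prod_(l : L2) nth 0 p (phi l)) *
     (\prod_(m : L1) nth 0 q (\max_(l | meets m l) (phi l : nat))).
Proof.
pose K := fun phi : {ffun L2 -> 'I_(size p)} =>
   \prod_(m : L1) nth 0 q (\max_(l | meets m l) (phi l : nat)).
transitivity (\sum_(R : {ffun L2 -> 'I_(size lam)}) K [ffun l => blkO (R l)]).
  apply: eq_bigr => R _; apply: eq_bigr => m _; congr (nth 0 q _).
  by apply: eq_bigr => l _; rewrite ffunE.
have := @partition_big nat 0 addn _ (index_enum _) _ xpredT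
  (fun R : {ffun L2 -> 'I_(size lam)} => [ffun l => blkO (R l)]) xpredT
  (fun R => K [ffun l => blkO (R l)]) (fun _ _ => isT).
move=> ->.
apply: eq_bigr => phi _.
rewrite (eq_bigr (fun _ => 1 * K phi)); last by move=> R /andP [_ /eqP ->]; rewrite mul1n.
rewrite -big_distrl /=; congr (_ * _).
rewrite big_mkcond /=.
rewrite (eq_bigr (fun R : {ffun L2 -> 'I_(size lam)} => \prod_l ((blkO (R l) == phi l) : nat))); last first.
  move=> R _; rewrite prod_b2n.
  have -> : ([ffun l => blkO (R l)] == phi) = [forall l, blkO (R l) == phi l].
    apply/eqP/forallP => [<- l|H]; first by rewrite ffunE.
    by apply/ffunP => l; rewrite ffunE; apply/eqP.
  by case: ifP.
rewrite -(bigA_distr_bigA (fun (l : L2) (r : 'I_(size lam)) => ((blkO r == phi l) : nat))).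
apply: eq_bigr => l _.
transitivity (\sum_(r < size lam) ((nth 0 (Blist p) r == phi l) : nat)).
  change (\sum_(r : 'I_(size lam)) ((blkO r == phi l) : nat) = \sum_(r < size lam) ((nth 0 (Blist p) r == phi l) : nat)).
  by apply: eq_bigr => r _; rewrite -val_eqE.
rewrite -(big_mkord xpredT (fun r => ((nth 0 (Blist p) r == phi l) : nat))).
rewrite lamE size_map -(big_nth 0 xpredT (fun x => ((x == phi l) : nat))).
rewrite -count_B // -sum1_count [RHS]big_mkcond /=.
change (\sum_(i <- Blist p) ((i == phi l) : nat) = \sum_(j <- Blist p) (if j == phi l then 1 else 0)).
by apply: eq_bigr => x _; case: eqP.
Qed.

End Main.

Lemma factor (p q : seq nat) (hs : size p = size q)
  (hmono : forall i j, (i <= j < size q)%N -> (nth 0 q j <= nth 0 q i)%N)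
  (n : nat) (S0 S1 S2 : 'I_n -> 'I_n)
  (h0 : forall i, S0 (S0 i) = i) (h1 : forall i, S1 (S1 i) = i)
  (h2 : forall i, S2 (S2 i) = i)
  (R : {ffun loop_type S0 S2 -> 'I_(size (pq_partition p q))})
  (m : loop_type S0 S1) :
  \sum_(c : 'I_(\max_(x <- pq_partition p q) x))
     [forall j, (lp S0 S1 j == m) ==>
        (c < nth 0 (pq_partition p q) (R (lp S0 S2 j)))] =
  nth 0 q (\max_(l : loop_type S0 S2 | [exists j, (j \in val m) && (j \in val l)])
              nth 0 (Blist p) (R l)).
Proof.
have meet : forall j (l : loop_type S0 S2),
    (j \in val m) && (j \in val l) = (lp S0 S1 j == m) && (lp S0 S2 j == l).
  by move=> j l; rewrite (mem_lp h0 h1) (mem_lp h0 h2).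
have [j0 Hj0] := lp_surj m.
have Pl0 : [exists j, (j \in val m) && (j \in val (lp S0 S2 j0))].
  by apply/existsP; exists j0; rewrite meet Hj0 !eqxx.
pose Pm := [pred l : loop_type S0 S2 | [exists j, (j \in val m) && (j \in val l)]].
have cpos : 0 < #|Pm| by apply/card_gt0P; exists (lp S0 S2 j0).
have [l0 Pl0' EX0] := eq_bigmax_cond (fun l => nth 0 (Blist p) (R l)) cpos.
set X := \max_(l | _) _.
have EX : X = nth 0 (Blist p) (R l0) by rewrite -EX0; apply: eq_bigl => l; rewrite inE.
rewrite inE /= in Pl0'.
have Xlt : X < size q by rewrite EX -hs blk_lt.
have tM : nth 0 q X <= \max_(x <- pq_partition p q) x.
  rewrite EX -nth_lam; apply: (@leq_bigmax_seq _ _ xpredT id) => //.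
  exact: mem_nth.
rewrite -(count_lt tM); apply: eq_bigr => c _; congr nat_of_bool.
apply/forallP/idP.
  move=> H; case/existsP: Pl0' => j /=; rewrite meet => /andP [/eqP E1 /eqP E2].
  by have := H j; rewrite E1 eqxx E2 /= nth_lam EX.
move=> Hc j; apply/implyP => /eqP Ej; rewrite nth_lam.
apply: leq_trans Hc _; apply: hmono; rewrite Xlt andbT.
by apply: leq_bigmax_cond; apply/existsP; exists j; rewrite meet Ej !eqxx.
Qed.

Theorem lemma3p9 (k : nat) (S0 S1 S2 : 'I_(2 * k) -> 'I_(2 * k))
  (p q : seq nat) :
  pair_partition S0 -> pair_partition S1 -> pair_partition S2 ->
  size p = size q ->
  (forall i, (i < size p)%N -> (0 < nth 0 p i)%N /\ (0 < nth 0 q i)%N) ->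
  (forall i j, (i <= j < size q)%N -> (nth 0 q j <= nth 0 q i)%N) ->
  N1 S0 S1 S2 (pq_partition p q) =
  \sum_(phi : {ffun loop_type S0 S2 -> 'I_(size p)})
     (\prod_(l : loop_type S0 S2) nth 0 p (phi l)) *
     (\prod_(m' : loop_type S0 S1)
        nth 0 q (\max_(l : loop_type S0 S2 |
                         [exists j, (j \in val m') && (j \in val l)]) (phi l : nat))).
Proof.
move=> P0 P1 P2 hs _ hmono.
have h0 : forall i, S0 (S0 i) = i by move=> i; case: (P0 i).
have h1 : forall i, S1 (S1 i) = i by move=> i; case: (P1 i).
have h2 : forall i, S2 (S2 i) = i by move=> i; case: (P2 i).
rewrite (N1_sum h0 h1 h2).
rewrite (eq_bigr (fun R : {ffun loop_type S0 S2 -> 'I_(size (pq_partition p q))} =>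
   \prod_(m : loop_type S0 S1) nth 0 q (\max_(l : loop_type S0 S2 |
       [exists j, (j \in val m) && (j \in val l)]) nth 0 (Blist p) (R l)))); last first.
  move=> R _.
  rewrite (sum_ffun_forall (lp S0 S1)
     (fun j (c : 'I_(\max_(x <- pq_partition p q) x)) =>
        (c : nat) < nth 0 (pq_partition p q) (R (lp S0 S2 j)))).
  by apply: eq_bigr => m _; rewrite (factor hs hmono h0 h1 h2).
exact: (step4 p q (fun (m : loop_type S0 S1) (l : loop_type S0 S2) =>
                     [exists j, (j \in val m) && (j \in val l)])).
Qed.
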